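(* Let $C=(N,E)$ be a (deterministic) TDD respecting a vtree $T$ over $X$. For every node $t$ of $T$ and all distinct $t$-nodes $g,g'$, the functions $f_g$ and $f_{g'}$ have no common model. As a consequence, every model $\tau$ of $f_C$ has a unique certificate in $C$.
   Context: For a finite set $A$, $2^A$ is the set of assignments $A\to\{0,1\}$; a Boolean function over $X$ is a map $2^X\to\{0,1\}$ with models the assignments mapped to $1$. A vtree over $X$ is a rooted tree in which every internal node has exactly two children (ordered: $t_1$, $t_2$) and whose leaves are labeled bijectively by $X$; $X_t$ denotes the variables labeling leaves below node $t$. An nTDD $C=(N,E)$ respecting $T$: nodes $N=\biguplus_t N_t$ ($t$-nodes) over nodes $t$ of $T$; a $t$-node with $t$ a leaf labeled $x$ has a label in $\{x,\neg x,1,0\}$; $E(g)=\emptyset$ for leaf $t$, and $E(g)\subseteq N_{t_1}\times N_{t_2}$ for internal $t$ with children $t_1,t_2$; a distinguished $r$-node $\mathrm{out}$ ($r$ the root). Semantics: a leaf $t$-node computes the function over $\{x\}$ given by its label (literal or constant); for internal $t$, $\tau\in 2^{X_t}$ is a model of $f_g$ iff some $(g_1,g_2)\in E(g)$ has $\tau|_{X_{t_1}}\models f_{g_1}$ and $\tau|_{X_{t_2}}\models f_{g_2}$; $f_C=f_{\mathrm{out}}$. A TDD is an nTDD such that (i) for every leaf $t$ labeled $x$, $N_t$ has at most one node labeled $x$, at most one labeled $\neg x$, at most one labeled $1$, and if some node is labeled $1$ all other nodes of $N_t$ are labeled $0$; (ii) for every internal $t$ and distinct $g,g'\in N_t$,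 $E(g)\cap E(g')=\emptyset$. A certificate for $\tau\in 2^X$ in $C$ is a choice of one $t$-node $g_t$ per node $t$ of $T$ with $g_r=\mathrm{out}$, each leaf choice labeled $1$ or by a literal true under $\tau$, and $(g_{t_1},g_{t_2})\in E(g_t)$ for each internal $t$ with children $t_1,t_2$. *)

(* Defs.v *)
From mathcomp Require Import all_boot.
Set Implicit Arguments. Unset Strict Implicit. Unset Printing Implicit Defensive.

Inductive vtree (X : Type) : Type :=
| VLeaf of X
| VNode of vtree X & vtree X.

Section Vtree.
Variable X : finType.

Fixpoint leaves (t : vtree X) : seq X :=
  match t with VLeaf x => [:: x] | VNode t1 t2 => leaves t1 ++ leaves t2 end.

Definition is_vtree (t : vtree X) : Prop :=
  uniq (leaves t) /\ forall x : X, x \in leaves t.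

(* Nodes of a vtree are identified with their positions: the path from the
   root (false = go to first child t1, true = go to second child t2). *)
Fixpoint subtree (t : vtree X) (p : seq bool) : option (vtree X) :=
  match p with
  | [::] => Some t
  | b :: p' => match t with
               | VLeaf _ => None
               | VNode t1 t2 => subtree (if b then t2 else t1) p'
               end
  end.

Definition is_vnode (t : vtree X) (p : seq bool) : bool := subtree t p.
Definition is_leafpos (t : vtree X) (p : seq bool) : bool :=
  if subtree t p is Some (VLeaf _) then true else false.
Definition is_internalpos (t : vtree X) (p : seq bool) : bool :=
  if subtree t p is Some (VNode _ _) then true else false.
End Vtree.

(* Labels of leaf t-nodes, where t is a leaf labeled x:
   LPos = x, LNeg = ~x, LOne = 1, LZero = 0. *)
Inductive label := LPos | LNeg | LOne | LZero.

(* The raw data of a circuit over a vtree: a finite set of nodes, each with the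
   position of the vtree node it belongs to (so N = disjoint union of the N_t),
   a label (relevant for leaf t-nodes), a set of children pairs E(g), and a
   distinguished output node. *)
Record ntdd_data (X : finType) := NTDD {
  cnode :> finType;
  cpos : cnode -> seq bool;
  clab : cnode -> label;
  cedges : cnode -> {set cnode * cnode};
  cout : cnode
}.

Section Circuit.
Variables (X : finType) (T : vtree X) (C : ntdd_data X).

Definition respects : Prop :=
  [/\ forall g : C, is_vnode T (cpos g),
      cpos (cout C) = [::],
      forall g : C, is_leafpos T (cpos g) -> cedges g = set0 &
      forall g : C, is_internalpos T (cpos g) ->
        forall e, e \in cedges g ->
          cpos e.1 = rcons (cpos g) false /\ cpos e.2 = rcons (cpos g) true].

(* semantics: f_g evaluated on an assignment tau (only the variables X_t of
   the vtree node t of g are read). *)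
Fixpoint evalT (t : vtree X) (g : C) (tau : X -> bool) : bool :=
  match t with
  | VLeaf x => match clab g with
               | LPos => tau x | LNeg => ~~ tau x | LOne => true | LZero => false end
  | VNode t1 t2 => [exists e in cedges g, evalT t1 e.1 tau && evalT t2 e.2 tau]
  end.

Definition sem (g : C) (tau : X -> bool) : bool :=
  if subtree T (cpos g) is Some t then evalT t g tau else false.

Definition fC (tau : X -> bool) : bool := sem (cout C) tau.

Definition is_tdd : Prop :=
  (forall p, is_leafpos T p ->
     (forall l : label, l <> LZero -> forall g g' : C,
         cpos g = p -> cpos g' = p -> clab g = l -> clab g' = l -> g = g') /\
     (forall g : C, cpos g = p -> clab g = LOne ->
         forall g' : C, cpos g' = p -> g' != g -> clab g' = LZero)) /\
  (forall p, is_internalpos T p ->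
     forall g g' : C, cpos g = p -> cpos g' = p -> g != g' ->
       [disjoint cedges g & cedges g']).

(* certificate for tau: a choice c p of a t-node for every node p of T *)
Definition is_certificate (tau : X -> bool) (c : seq bool -> C) : Prop :=
  [/\ c [::] = cout C,
      forall p, is_vnode T p -> cpos (c p) = p,
      forall p, is_leafpos T p ->
        match clab (c p), subtree T p with
        | LOne, _ => true
        | LPos, Some (VLeaf x) => tau x
        | LNeg, Some (VLeaf x) => ~~ tau x
        | _, _ => false
        end &
      forall p, is_internalpos T p ->
        (c (rcons p false), c (rcons p true)) \in cedges (c p)].
End Circuit.

(* Main.v *)
Require Import Defs.
From mathcomp Require Import all_boot.
Set Implicit Arguments. Unset Strict Implicit. Unset Printing Implicit Defensive.

Section Aux.
Variables (X : finType) (T : vtree X) (C : ntdd_data X).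

Lemma subtree_nil (t : vtree X) : subtree t [::] = Some t.
Proof. by case: t. Qed.

Lemma subtree_cons (t1 t2 : vtree X) b p :
  subtree (VNode t1 t2) (b :: p) = subtree (if b then t2 else t1) p.
Proof. by []. Qed.

Lemma subtree_cat (t : vtree X) p q :
  subtree t (p ++ q) = match subtree t p with Some t' => subtree t' q | None => None end.
Proof.
elim: p t => [|b p IH] [x|t1 t2] //=.
Qed.

Lemma subtree_rcons (t : vtree X) p b t1 t2 :
  subtree t p = Some (VNode t1 t2) -> subtree t (rcons p b) = Some (if b then t2 else t1).
Proof. by move=> H; rewrite -cats1 subtree_cat H /= subtree_nil. Qed.

Lemma subtree_rcons_inv (t : vtree X) p b t' :
  subtree t (rcons p b) = Some t' -> exists t1 t2, subtree t p = Some (VNode t1 t2).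
Proof.
rewrite -cats1 subtree_cat; case: (subtree t p) => [[x|t1 t2]|] //= _.
by exists t1, t2.
Qed.

Lemma sem_eval g t : subtree T (cpos g) = Some t -> sem T g = evalT (C:=C) t g.
Proof. by rewrite /sem => ->. Qed.

Lemma part1 : respects T C -> is_tdd T C ->
  forall t (g g' : C), subtree T (cpos g) = Some t -> cpos g = cpos g' -> g != g' ->
  forall tau, ~~ (evalT t g tau && evalT t g' tau).
Proof.
case=> _ _ _ Hint [Hleaf Hnode].
elim=> [x|t1 IH1 t2 IH2] g g' Hs Hp Hne tau.
- have Hl : is_leafpos T (cpos g) by rewrite /is_leafpos Hs.
  have [H1 H2] := Hleaf _ Hl.
  have Hsame : forall l, l <> LZero -> clab g = l -> clab g' = l -> False.
    move=> l Hl0 E1 E2; move/eqP: Hne; apply; exact: (H1 l Hl0 g g').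
  rewrite /=; case E: (clab g); case E': (clab g') => //=;
    try (exfalso; apply: (Hsame _ _ E E') => //);
    try by case: (tau x).
  1-4: have Hne' : g' != g by rewrite eq_sym.
  1-4: first [ by rewrite (H2 g erefl E g' (esym Hp) Hne') in E'
             | by rewrite (H2 g' (esym Hp) E' g erefl Hne) in E ].
- have Hi : is_internalpos T (cpos g) by rewrite /is_internalpos Hs.
  have Hi' : is_internalpos T (cpos g') by rewrite -Hp.
  apply/negP => /andP [/existsP [e /andP [He /andP [Ea Eb]]] /existsP [e' /andP [He' /andP [Ea' Eb']]]].
  have [P1 P2] := Hint _ Hi _ He.
  have [P1' P2'] := Hint _ Hi' _ He'.
  case: (eqVneq e e') => [Eee|Nee].
  + have Hd := Hnode _ Hi g g' erefl (esym Hp) Hne.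
    subst e'. by move/disjointFr: Hd => /(_ _ He); rewrite He'.
  + case: (eqVneq e.1 e'.1) => [E1|N1].
    * have N2 : e.2 != e'.2.
        apply: contra Nee => /eqP E2; apply/eqP.
        by move: E1 E2; case: e {He P1 P2 Ea Eb} => a b; case: e' {He' P1' P2' Ea' Eb'} => a' b' /= -> ->.
      have A : subtree T (cpos e.2) = Some t2 by rewrite P2; exact: subtree_rcons Hs.
      have B : cpos e.2 = cpos e'.2 by rewrite P2 P2' Hp.
      move/negP: (IH2 e.2 e'.2 A B N2 tau); apply; apply/andP; split; [exact: Eb | exact: Eb'].
    * have A : subtree T (cpos e.1) = Some t1 by rewrite P1; exact: subtree_rcons Hs.
      have B : cpos e.1 = cpos e'.1 by rewrite P1 P1' Hp.
      move/negP: (IH1 e.1 e'.1 A B N1 tau); apply; apply/andP; split; [exact: Ea | exact: Ea'].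
Qed.

Variable tau : X -> bool.

Fixpoint cert (t : vtree X) (g : C) (p : seq bool) {struct p} : C :=
  match p, t with
  | [::], _ => g
  | b :: p', VNode t1 t2 =>
      let e := odflt (g, g) [pick e : C * C in cedges g | evalT (C:=C) t1 e.1 tau && evalT (C:=C) t2 e.2 tau] in
      cert (if b then t2 else t1) (if b then e.2 else e.1) p'
  | _ :: _, VLeaf _ => g
  end.

Lemma cert_rcons t g p b t' : subtree t p = Some t' ->
  cert t g (rcons p b) = cert t' (cert t g p) [:: b].
Proof.
elim: p t g => [|a p IH] [x|t1 t2] g //=.
- by case=> <-.
- by case=> <-.
- move=> H; rewrite IH //; by case: a H.
Qed.

Lemma cert_inv : respects T C -> forall p t (g : C) q, subtree T q = Some t -> cpos g = q ->
  evalT t g tau -> forall t', subtree t p = Some t' ->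
  cpos (cert t g p) = q ++ p /\ evalT t' (cert t g p) tau.
Proof.
case=> _ _ _ Hint.
elim=> [|b p IH] [x|t1 t2] g q Hq Hg Hev t' //=.
- by case=> <-; rewrite cats0.
- by case=> <-; rewrite cats0.
- have Hi : is_internalpos T (cpos g) by rewrite /is_internalpos Hg Hq.
  case: pickP => [e /andP [He /andP [Ea Eb]]|Hn]; last first.
    by move/existsP: Hev => [e /andP [He Hee]]; move: (Hn e); rewrite He Hee.
  have [P1 P2] := Hint _ Hi _ He.
  move=> Hs.
  have := IH (if b then t2 else t1) (if b then e.2 else e.1) (rcons q b) _ _ _ t' Hs.
  rewrite cat_rcons; apply.
  + exact: subtree_rcons Hq.
  + by case: b Hs; rewrite ?P1 ?P2 Hg.
  + by case: b Hs.
Qed.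

Lemma cert_models (c : seq bool -> C) : is_certificate T tau c ->
  forall t p, subtree T p = Some t -> evalT t (c p) tau.
Proof.
case=> _ Hpos Hl Hi.
elim=> [x|t1 IH1 t2 IH2] p Hs /=.
- have := Hl p; rewrite /is_leafpos Hs => /(_ isT).
  by case: (clab (c p)).
- apply/existsP; exists (c (rcons p false), c (rcons p true)).
  rewrite Hi ?/is_internalpos ?Hs //= IH1 ?IH2 //.
  + exact: subtree_rcons Hs.
  + exact: subtree_rcons Hs.
Qed.

End Aux.

Theorem theorem2 (X : finType) (T : vtree X) (C : ntdd_data X) :
  is_vtree T -> respects T C -> is_tdd T C ->
  (forall g g' : C, cpos g = cpos g' -> g != g' ->
     forall tau : X -> bool, ~~ (sem T g tau && sem T g' tau)) /\
  (forall tau : X -> bool, fC T C tau ->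
     exists c : seq bool -> C,
       is_certificate T tau c /\
       forall c' : seq bool -> C, is_certificate T tau c' ->
         forall p, is_vnode T p -> c' p = c p).
Proof.
move=> _ Hr Ht.
have P1 : forall g g' : C, cpos g = cpos g' -> g != g' ->
     forall tau : X -> bool, ~~ (sem T g tau && sem T g' tau).
  move=> g g' Hp Hne tau; rewrite /sem -Hp.
  case Hs: (subtree T (cpos g)) => [t|] //.
  exact: (part1 Hr Ht Hs Hp Hne tau).
split=> // tau HfC.
have Hr' := Hr; case: Hr' => _ Hout _ _.
have HT : evalT T (cout C) tau by move: HfC; rewrite /fC /sem Hout subtree_nil.
set c := cert tau T (cout C).
have Hinv : forall p t', subtree T p = Some t' -> cpos (c p) = p /\ evalT t' (c p) tau.
  move=> p t' Hs; exact: (cert_inv Hr (q:=[::]) (subtree_nil T) Hout HT Hs).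
have Hcert : is_certificate T tau c.
  split=> //.
  - move=> p; rewrite /is_vnode; case Hs: (subtree T p) => [t'|] // _.
    by have [-> _] := Hinv p t' Hs.
  - move=> p; rewrite /is_leafpos; case Hs: (subtree T p) => [[x|]|] // _.
    have [_ H] := Hinv p _ Hs; move: H => /=.
    by case: (clab (c p)).
  - move=> p; rewrite /is_internalpos; case Hs: (subtree T p) => [[|t1 t2]|] // _.
    have [_ H] := Hinv p _ Hs.
    rewrite /c !(cert_rcons tau _ _ Hs) /=.
    case: pickP => [e /andP [He _]|Hn]; first by rewrite -surjective_pairing.
    by move/existsP: H => [e /andP [He Hee]]; move: (Hn e); rewrite He Hee.
exists c; split=> // c' Hc'.
elim/last_ind => [|p b IH] Hv.
  by case: Hc' => ->; case: Hcert => ->.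
have [t1 [t2 Hs]] : exists t1 t2, subtree T p = Some (VNode t1 t2).
  by move: Hv; rewrite /is_vnode; case Hs': (subtree T (rcons p b)) => [t'|] // _;
     exact: subtree_rcons_inv Hs'.
have Hvp : is_vnode T p by rewrite /is_vnode Hs.
have Hip : is_internalpos T p by rewrite /is_internalpos Hs.
have E := IH Hvp.
have Hm := cert_models Hc'. have Hm0 := cert_models Hcert.
have [_ Hpc' _ _] := Hc'. have [_ Hpc _ _] := Hcert.
have key : forall b0, c' (rcons p b0) = c (rcons p b0).
  move=> b0; apply/eqP; apply: contraT => Hne.
  have Hs0 := subtree_rcons b0 Hs.
  have Hv0 : is_vnode T (rcons p b0) by rewrite /is_vnode Hs0.
  have := P1 _ _ (etrans (Hpc' _ Hv0) (esym (Hpc _ Hv0))) Hne tau.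
  rewrite (sem_eval (t:=if b0 then t2 else t1)) ?(Hpc' _ Hv0) //.
  rewrite (sem_eval (t:=if b0 then t2 else t1)) ?(Hpc _ Hv0) //.
  by rewrite Hm ?Hm0.
exact: key.
Qed.
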